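(* Let $H\in C^\infty(\mathbb{R}^2)$ be convex and let $U\subset\mathbb{R}^2$ be a domain. For every $v\in C^\infty(U)$, $$\langle D^2_{pp}H(Dv)D[H(Dv)],D[H(Dv)]\rangle-\operatorname{div}[D_pH(Dv)]\,\mathscr A_H[v]=(-\det D^2v)\langle[D^2_{pp}H(Dv)]^*D_pH(Dv),D_pH(Dv)\rangle\quad\text{in }U.$$
   Context: $\mathscr A_H[v]:=\sum_{i,j=1}^2H_{p_i}(Dv)H_{p_j}(Dv)v_{x_ix_j}$. For a $2\times2$ matrix $A=(a_{ij})$, $A^*$ is its adjugate $\begin{pmatrix}a_{22}&-a_{21}\\-a_{12}&a_{11}\end{pmatrix}$. *)

(* Defs.v *)
From Stdlib Require Import Reals List.
From Coquelicot Require Import Coquelicot.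
Open Scope R_scope.

Inductive dir := X1 | X2.

Definition pd (i : dir) (f : R -> R -> R) : R -> R -> R :=
  match i with
  | X1 => fun x y => Derive (fun t => f t y) x
  | X2 => fun x y => Derive (fun t => f x t) y
  end.

Definition iter_pd (l : list dir) (f : R -> R -> R) : R -> R -> R :=
  fold_right pd f l.

Definition smooth_on (U : R -> R -> Prop) (f : R -> R -> R) : Prop :=
  forall (l : list dir) (x y : R), U x y ->
    ex_derive (fun t => iter_pd l f t y) x /\
    ex_derive (fun t => iter_pd l f x t) y /\
    continuity_2d_pt (iter_pd l f) x y.

Definition convex2 (H : R -> R -> R) : Prop :=
  forall x1 y1 x2 y2 t, 0 <= t <= 1 ->
    H (t * x1 + (1 - t) * x2) (t * y1 + (1 - t) * y2)
      <= t * H x1 y1 + (1 - t) * H x2 y2.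

Definition as_set (U : R -> R -> Prop) : R * R -> Prop :=
  fun p => U (fst p) (snd p).

(** A domain: nonempty, open, connected subset of R^2. *)
Definition is_domain (U : R -> R -> Prop) : Prop :=
  (exists x y, U x y) /\
  open (as_set U) /\
  (forall A B : R * R -> Prop, open A -> open B ->
     (forall p, as_set U p -> A p \/ B p) ->
     (forall p, as_set U p -> A p -> B p -> False) ->
     (forall p, as_set U p -> ~ A p) \/ (forall p, as_set U p -> ~ B p)).

Definition sum2 (f : dir -> R) : R := f X1 + f X2.
Definition inner (u w : dir -> R) : R := sum2 (fun i => u i * w i).
Definition mulv (B : dir -> dir -> R) (u : dir -> R) : dir -> R :=
  fun i => sum2 (fun j => B i j * u j).
Definition det2 (A : dir -> dir -> R) : R :=
  A X1 X1 * A X2 X2 - A X1 X2 * A X2 X1.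
Definition adj2 (A : dir -> dir -> R) : dir -> dir -> R :=
  fun i j => match i, j with
  | X1, X1 => A X2 X2
  | X1, X2 => - A X2 X1
  | X2, X1 => - A X1 X2
  | X2, X2 => A X1 X1
  end.

Definition grad (f : R -> R -> R) (x y : R) : dir -> R := fun i => pd i f x y.
Definition hess (f : R -> R -> R) (x y : R) : dir -> dir -> R :=
  fun i j => pd j (pd i f) x y.

Definition comp_Dv (H v : R -> R -> R) : R -> R -> R :=
  fun a b => H (pd X1 v a b) (pd X2 v a b).

Definition DpH_Dv (H v : R -> R -> R) : dir -> R -> R -> R :=
  fun i => comp_Dv (pd i H) v.

Definition divergence (F : dir -> R -> R -> R) (x y : R) : R :=
  sum2 (fun i => pd i (F i) x y).

Definition AH (H v : R -> R -> R) (x y : R) : R :=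
  sum2 (fun i => sum2 (fun j =>
    DpH_Dv H v i x y * DpH_Dv H v j x y * hess v x y i j)).

(* Main.v *)
Require Import Defs.
From Stdlib Require Import Reals Lra Psatz.
From Coquelicot Require Import Coquelicot.
Open Scope R_scope.

Lemma smooth_ex_diff (U : R -> R -> Prop) f : smooth_on U f ->
  forall n l x y, U x y -> ex_diff_n (iter_pd l f) n x y.
Proof.
intros Hs n; induction n as [|n IH]; intros l x y Hu;
 destruct (Hs l x y Hu) as [h1 [h2 h3]]; simpl.
- split; [exact h3|exact I].
- split; [exact h3|]. split; [exact h1|]. split; [exact h2|].
  split; [exact (IH (cons X1 l) x y Hu)|exact (IH (cons X2 l) x y Hu)].
Qed.

Lemma dom_loc U x y : is_domain U -> U x y -> locally_2d U x y.
Proof.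
intros [_ [Ho _]] Hu. apply locally_2d_locally. apply (Ho (x,y)). exact Hu.
Qed.

Lemma loc_impl (P Q : R -> R -> Prop) x y : (forall u v, P u v -> Q u v) ->
  locally_2d P x y -> locally_2d Q x y.
Proof. intros HPQ [d Hd]. exists d. intros u v a b. apply HPQ, Hd; auto. Qed.

Lemma diff_of_C2 f x y : locally_2d (fun u v => ex_diff_n f 2 u v) x y ->
  differentiable_pt_lim f x y (pd X1 f x y) (pd X2 f x y).
Proof.
intros Hl. destruct (Taylor_Lagrange_2d f 1 x y Hl) as [D [d Hd]].
intros eps.
assert (Hp : 0 < Rmin d (eps / (Rabs D + 1))).
{ apply Rmin_pos. apply cond_pos. apply Rdiv_lt_0_compat. apply cond_pos.
  pose proof (Rabs_pos D); lra. }
exists (mkposreal _ Hp). simpl. intros u v Hu Hv.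
assert (Hu' : Rabs (u - x) < d) by (eapply Rlt_le_trans; [exact Hu| apply Rmin_l]).
assert (Hv' : Rabs (v - y) < d) by (eapply Rlt_le_trans; [exact Hv| apply Rmin_l]).
specialize (Hd u v Hu' Hv').
unfold DL_pol, differential in Hd. simpl in Hd. unfold Binomial.C in Hd. simpl in Hd.
unfold partial_derive in Hd. simpl in Hd.
set (m := Rmax (Rabs (u - x)) (Rabs (v - y))) in *.
assert (Hm0 : 0 <= m) by (unfold m; eapply Rle_trans; [apply Rabs_pos|apply Rmax_l]).
assert (Hme : m < eps / (Rabs D + 1)).
{ unfold m. apply Rmax_lub_lt; [eapply Rlt_le_trans; [exact Hu|apply Rmin_r]|eapply Rlt_le_trans; [exact Hv|apply Rmin_r]]. }
assert (HD1 : 0 < Rabs D + 1) by (pose proof (Rabs_pos D); lra).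
assert (Hme' : m * (Rabs D + 1) <= eps).
{ apply Rmult_lt_compat_r with (r := Rabs D + 1) in Hme; [|exact HD1].
  unfold Rdiv in Hme. rewrite Rmult_assoc, Rinv_l in Hme; lra. }
assert (HDa : D <= Rabs D) by apply Rle_abs.
match type of Hd with Rabs ?a <= _ =>
  assert (Heq : f u v - f x y - (pd X1 f x y * (u - x) + pd X2 f x y * (v - y)) = a) by (unfold pd; field) end.
unfold pd in Heq |- *. rewrite Heq.
eapply Rle_trans; [exact Hd|]. nra.
Qed.
Lemma glob_loc g n : smooth_on (fun _ _ => True) g -> forall l a b,
  locally_2d (fun u v => ex_diff_n (iter_pd l g) n u v) a b.
Proof.
intros Hg l a b. exists (mkposreal 1 Rlt_0_1). intros u v _ _.
apply (smooth_ex_diff _ g Hg n l u v I).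
Qed.

Lemma chain_X1 g v x y : locally_2d (fun u w => ex_diff_n g 2 u w) (pd X1 v x y) (pd X2 v x y) ->
  ex_derive (fun t => pd X1 v t y) x -> ex_derive (fun t => pd X2 v t y) x ->
  pd X1 (comp_Dv g v) x y =
  pd X1 g (pd X1 v x y) (pd X2 v x y) * pd X1 (pd X1 v) x y
  + pd X2 g (pd X1 v x y) (pd X2 v x y) * pd X1 (pd X2 v) x y.
Proof.
intros Hl H1 H2.
assert (E: pd X1 (comp_Dv g v) x y = Derive (fun t => g (pd X1 v t y) (pd X2 v t y)) x) by reflexivity. rewrite E.
apply is_derive_unique. apply is_derive_Reals.
eapply (derivable_pt_lim_comp_2d g (fun t => pd X1 v t y) (fun t => pd X2 v t y)).
- apply diff_of_C2. exact Hl.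
- apply is_derive_Reals. apply Derive_correct; exact H1.
- apply is_derive_Reals. apply Derive_correct; exact H2.
Qed.

Lemma chain_X2 g v x y : locally_2d (fun u w => ex_diff_n g 2 u w) (pd X1 v x y) (pd X2 v x y) ->
  ex_derive (fun t => pd X1 v x t) y -> ex_derive (fun t => pd X2 v x t) y ->
  pd X2 (comp_Dv g v) x y =
  pd X1 g (pd X1 v x y) (pd X2 v x y) * pd X2 (pd X1 v) x y
  + pd X2 g (pd X1 v x y) (pd X2 v x y) * pd X2 (pd X2 v) x y.
Proof.
intros Hl H1 H2.
assert (E: pd X2 (comp_Dv g v) x y = Derive (fun t => g (pd X1 v x t) (pd X2 v x t)) y) by reflexivity. rewrite E.
apply is_derive_unique. apply is_derive_Reals.
eapply (derivable_pt_lim_comp_2d g (fun t => pd X1 v x t) (fun t => pd X2 v x t)).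
- apply diff_of_C2. exact Hl.
- apply is_derive_Reals. apply Derive_correct; exact H1.
- apply is_derive_Reals. apply Derive_correct; exact H2.
Qed.

Lemma schwarz_U (U : R -> R -> Prop) f x y : smooth_on U f -> locally_2d U x y ->
  pd X1 (pd X2 f) x y = pd X2 (pd X1 f) x y.
Proof.
intros Hs Hl.
apply (Schwarz f x y).
- apply (loc_impl U); [|exact Hl]. intros u v Hu.
  destruct (Hs nil u v Hu) as [a [b _]].
  destruct (Hs (cons X2 nil) u v Hu) as [c _].
  destruct (Hs (cons X1 nil) u v Hu) as [_ [d _]].
  repeat split; assumption.
- destruct Hl as [e He]. exact (proj2 (proj2 (Hs (cons X1 (cons X2 nil)) x y (He x y ltac:(rewrite Rminus_diag, Rabs_R0; apply cond_pos) ltac:(rewrite Rminus_diag, Rabs_R0; apply cond_pos))))).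
- destruct Hl as [e He]. exact (proj2 (proj2 (Hs (cons X2 (cons X1 nil)) x y (He x y ltac:(rewrite Rminus_diag, Rabs_R0; apply cond_pos) ltac:(rewrite Rminus_diag, Rabs_R0; apply cond_pos))))).
Qed.

Theorem lemma2p1 (H : R -> R -> R) (U : R -> R -> Prop) (v : R -> R -> R) :
  smooth_on (fun _ _ => True) H -> convex2 H ->
  is_domain U -> smooth_on U v ->
  forall x y : R, U x y ->
    inner (mulv (hess H (pd X1 v x y) (pd X2 v x y)) (grad (comp_Dv H v) x y))
          (grad (comp_Dv H v) x y)
    - divergence (DpH_Dv H v) x y * AH H v x y
    = (- det2 (hess v x y)) *
      inner (mulv (adj2 (hess H (pd X1 v x y) (pd X2 v x y)))
                  (grad H (pd X1 v x y) (pd X2 v x y)))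
            (grad H (pd X1 v x y) (pd X2 v x y)).
Proof.
intros HH _ HD Hv x y Hu.
pose proof (dom_loc U x y HD Hu) as Hl.
destruct (Hv (cons X1 nil) x y Hu) as [a1 [a2 _]].
destruct (Hv (cons X2 nil) x y Hu) as [b1 [b2 _]].
pose proof (glob_loc H 2 HH nil : forall a b, locally_2d (fun u w => ex_diff_n H 2 u w) a b) as G0.
pose proof (glob_loc H 2 HH (cons X1 nil) : forall a b, locally_2d (fun u w => ex_diff_n (pd X1 H) 2 u w) a b) as G1.
pose proof (glob_loc H 2 HH (cons X2 nil) : forall a b, locally_2d (fun u w => ex_diff_n (pd X2 H) 2 u w) a b) as G2.
unfold inner, mulv, sum2, grad, divergence, AH, DpH_Dv, hess, det2, adj2.
rewrite (chain_X1 H v x y (G0 _ _) a1 b1).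
rewrite (chain_X2 H v x y (G0 _ _) a2 b2).
unfold sum2.
rewrite (chain_X1 (pd X1 H) v x y (G1 _ _) a1 b1).
rewrite (chain_X2 (pd X2 H) v x y (G2 _ _) a2 b2).
unfold comp_Dv.
rewrite (schwarz_U U v x y Hv Hl).
rewrite (schwarz_U (fun _ _ => True) H _ _ HH (ex_intro _ (mkposreal 1 Rlt_0_1) (fun _ _ _ _ => I))).
ring.
Qed.
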